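(* Let $\mathcal{E}$ be an ellipse in a Euclidean plane, let $c$ be a chord of $\mathcal{E}$, and let $g$ be an affine bijection of the plane. Consider the three properties: (1) a chord of $\mathcal{E}$ parallel to $c$ and passing through a focus of $\mathcal{E}$ is sent by $g$ onto a chord of $g(\mathcal{E})$ passing through a focus of $g(\mathcal{E})$; (2) the length of $c$ is preserved, i.e. $g(c)$ has the same length as $c$; (3) the length of the major axis is preserved, i.e. $g(\mathcal{E})$ has the same major axis length as $\mathcal{E}$. Then any two of these three properties imply the remaining one. *)

(* Defs.v *)
From HB Require Import structures.
From mathcomp Require Import all_boot all_order all_algebra.
Set Implicit Arguments. Unset Strict Implicit. Unset Printing Implicit Defensive.
Import Order.TTheory GRing.Theory Num.Theory.
Local Open Scope ring_scope.

Notation point R := 'rV[R]_2.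

Definition dist {R : rcfType} (p q : point R) : R :=
  Num.sqrt (\sum_(i < 2) (p ord0 i - q ord0 i) ^+ 2).

(* The ellipse with foci F1, F2 and semi-major axis a (requires dist F1 F2 < 2a);
   circles are the case F1 = F2. *)
Definition ellipse {R : rcfType} (F1 F2 : point R) (a : R) : point R -> Prop :=
  fun P => dist P F1 + dist P F2 = 2 * a.

Definition is_ellipse_with {R : rcfType} (S : point R -> Prop) (F1 F2 : point R) (a : R) : Prop :=
  dist F1 F2 < 2 * a /\ forall P, S P <-> ellipse F1 F2 a P.

Definition is_focus {R : rcfType} (S : point R -> Prop) (F : point R) : Prop :=
  exists F' a, is_ellipse_with S F F' a.

Definition major_axis_length {R : rcfType} (S : point R -> Prop) (L : R) : Prop :=
  exists F1 F2, is_ellipse_with S F1 F2 (L / 2).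

Definition affine_map {R : rcfType} (A : 'M[R]_2) (b : point R) (x : point R) : point R :=
  x *m A + b.

Definition image_set {R : rcfType} (g : point R -> point R) (S : point R -> Prop) : point R -> Prop :=
  fun y => exists x, S x /\ y = g x.

Definition on_segment {R : rcfType} (u v x : point R) : Prop :=
  exists t : R, 0 <= t <= 1 /\ x = (1 - t) *: u + t *: v.

Definition is_chord {R : rcfType} (S : point R -> Prop) (u v : point R) : Prop :=
  S u /\ S v /\ u != v.

Definition parallel {R : rcfType} (w1 w2 : point R) : Prop :=
  exists k : R, w1 = k *: w2.

(* Main.v *)
Require Import Defs.
From HB Require Import structures.
From mathcomp Require Import all_boot all_order all_algebra.
From mathcomp Require Import ring lra.
Set Implicit Arguments. Unset Strict Implicit. Unset Printing Implicit Defensive.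
Import Order.TTheory GRing.Theory Num.Theory.
Local Open Scope ring_scope.

Section S.
Variable R : rcfType.
Definition i1 : 'I_2 := Ordinal (erefl (1 < 2)%N).
Definition c0 (v : point R) := v ord0 ord0.
Definition c1 (v : point R) := v ord0 i1.
Lemma wid0 : widen_ord (leqnSn 1) ord_max = ord0 :> 'I_2. Proof. exact/val_inj. Qed.
Lemma omax : ord_max = i1 :> 'I_2. Proof. exact/val_inj. Qed.
Definition mkv (x y : R) : point R := \row_(j < 2) (if (val j == 0)%N then x else y).

Lemma c0_mkv x y : c0 (mkv x y) = x. Proof. by rewrite /c0 mxE. Qed.
Lemma c1_mkv x y : c1 (mkv x y) = y. Proof. by rewrite /c1 mxE. Qed.
Lemma c0D u v : c0 (u + v) = c0 u + c0 v. Proof. by rewrite /c0 mxE. Qed.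
Lemma c1D u v : c1 (u + v) = c1 u + c1 v. Proof. by rewrite /c1 mxE. Qed.
Lemma c0B u v : c0 (u - v) = c0 u - c0 v. Proof. by rewrite /c0 !mxE. Qed.
Lemma c1B u v : c1 (u - v) = c1 u - c1 v. Proof. by rewrite /c1 !mxE. Qed.
Lemma c0N u : c0 (- u) = - c0 u. Proof. by rewrite /c0 !mxE. Qed.
Lemma c1N u : c1 (- u) = - c1 u. Proof. by rewrite /c1 !mxE. Qed.
Lemma c0Z k u : c0 (k *: u) = k * c0 u. Proof. by rewrite /c0 !mxE. Qed.
Lemma c1Z k u : c1 (k *: u) = k * c1 u. Proof. by rewrite /c1 !mxE. Qed.
Lemma c0M u (A : 'M[R]_2) : c0 (u *m A) = c0 u * A ord0 ord0 + c1 u * A i1 ord0.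
Proof. by rewrite /c0 /c1 mxE !big_ord_recr big_ord0 /= add0r wid0 omax. Qed.
Lemma c1M u (A : 'M[R]_2) : c1 (u *m A) = c0 u * A ord0 i1 + c1 u * A i1 i1.
Proof. by rewrite /c0 /c1 mxE !big_ord_recr big_ord0 /= add0r wid0 omax. Qed.
Lemma c0_0 : c0 (0 : point R) = 0. Proof. by rewrite /c0 mxE. Qed.
Lemma c1_0 : c1 (0 : point R) = 0. Proof. by rewrite /c1 mxE. Qed.

Lemma vecP (u v : point R) : c0 u = c0 v -> c1 u = c1 v -> u = v.
Proof.
move=> h0 h1; apply/rowP => j; case: j => [[|[|//]]] Hj.
  by rewrite (_ : Ordinal Hj = ord0) //; apply/val_inj.
by rewrite (_ : Ordinal Hj = i1) //; apply/val_inj.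
Qed.

Definition N2 (x y : R) := x ^+ 2 + y ^+ 2.

Lemma distE (p q : point R) : dist p q = Num.sqrt (N2 (c0 p - c0 q) (c1 p - c1 q)).
Proof.
rewrite /dist /N2 !big_ord_recr big_ord0 /= add0r /c0 /c1.
by rewrite wid0 omax.
Qed.
Lemma N2_ge0 x y : 0 <= N2 x y.
Proof. rewrite /N2; nra. Qed.

Lemma tri_real x0 x1 w0 w1 :
  Num.sqrt (N2 (x0 + w0) (x1 + w1)) <= Num.sqrt (N2 x0 x1) + Num.sqrt (N2 w0 w1).
Proof.
have h1 := sqr_sqrtr (N2_ge0 x0 x1).
have h2 := sqr_sqrtr (N2_ge0 w0 w1).
have h3 := sqr_sqrtr (N2_ge0 (x0 + w0) (x1 + w1)).
have g1 := sqrtr_ge0 (N2 x0 x1).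
have g2 := sqrtr_ge0 (N2 w0 w1).
have g3 := sqrtr_ge0 (N2 (x0 + w0) (x1 + w1)).
set s1 := Num.sqrt (N2 x0 x1) in h1 g1 *.
set s2 := Num.sqrt (N2 w0 w1) in h2 g2 *.
set s := Num.sqrt _ in h3 g3 *.
have hp : x0 * w0 + x1 * w1 <= s1 * s2.
  have : (x0 * w0 + x1 * w1) ^+ 2 <= (s1 * s2) ^+ 2.
    rewrite exprMn h1 h2 /N2.
    have := sqr_ge0 (x0 * w1 - x1 * w0); nra.
  have : 0 <= s1 * s2 by nra.
  nra.
move: h3; rewrite /N2 => h3.
have : s ^+ 2 = s1 ^+ 2 + s2 ^+ 2 + 2 * (x0 * w0 + x1 * w1) by rewrite h3 h1 h2 /N2; ring.
nra.
Qed.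

Definition Phi (a x0 x1 w0 w1 : R) :=
  16 * a ^+ 2 * N2 x0 x1 - (4 * a ^+ 2 - N2 w0 w1 - 2 * (x0 * w0 + x1 * w1)) ^+ 2.

Lemma ell_real a x0 x1 w0 w1 : Num.sqrt (N2 w0 w1) < 2 * a ->
  (Num.sqrt (N2 x0 x1) + Num.sqrt (N2 (x0 + w0) (x1 + w1)) = 2 * a) <-> Phi a x0 x1 w0 w1 = 0.
Proof.
move=> hc.
have t1 := tri_real x0 x1 w0 w1.
have t2 := tri_real (x0 + w0) (x1 + w1) (- w0) (- w1).
rewrite !addrK (_ : N2 (- w0) (- w1) = N2 w0 w1) in t2; last by rewrite /N2; ring.
have h1 := sqr_sqrtr (N2_ge0 x0 x1).
have h2 := sqr_sqrtr (N2_ge0 w0 w1).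
have h3 := sqr_sqrtr (N2_ge0 (x0 + w0) (x1 + w1)).
have g1 := sqrtr_ge0 (N2 x0 x1).
have g2 := sqrtr_ge0 (N2 w0 w1).
have g3 := sqrtr_ge0 (N2 (x0 + w0) (x1 + w1)).
set r1 := Num.sqrt (N2 x0 x1) in h1 g1 t1 t2 *.
set c := Num.sqrt (N2 w0 w1) in h2 g2 t1 t2 hc *.
set r2 := Num.sqrt (N2 (x0 + w0) (x1 + w1)) in h3 g3 t1 t2 *.
have hP : Phi a x0 x1 w0 w1 = 16 * a ^+ 2 * r1 ^+ 2 - (4 * a ^+ 2 + r1 ^+ 2 - r2 ^+ 2) ^+ 2.
  rewrite h1 h3 /Phi /N2; ring.
rewrite hP; split.
  move=> e; have -> : r2 = 2 * a - r1 by rewrite -e; ring.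
  ring.
move=> e.
have f1 : (4 * a * r1 - (4 * a ^+ 2 + r1 ^+ 2 - r2 ^+ 2)) *
          ((2 * a + r1 - r2) * (2 * a + r1 + r2)) = 0.
  rewrite -e; ring.
have p1 : 0 < (2 * a + r1 - r2) * (2 * a + r1 + r2) by nra.
move/eqP: f1; rewrite mulf_eq0 (gt_eqF p1) orbF => /eqP f1.
have f2 : (2 * a - r1 - r2) * (2 * a - r1 + r2) = 0.
  rewrite -[RHS]oppr0 -f1; ring.
have p2 : 0 < 2 * a - r1 + r2 by nra.
move/eqP: f2; rewrite mulf_eq0 (gt_eqF p2) orbF subr_eq0 => f2.
rewrite subr_eq addrC in f2; exact/esym/eqP. 
Qed.

Lemma N2_eq0 x y : N2 x y = 0 -> x = 0 /\ y = 0.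
Proof.
rewrite /N2 => h.
have hx : x ^+ 2 = 0 by have := sqr_ge0 x; have := sqr_ge0 y; lra.
have hy : y ^+ 2 = 0 by have := sqr_ge0 x; have := sqr_ge0 y; lra.
by split; apply/eqP; rewrite -sqrf_eq0; apply/eqP.
Qed.

Ltac cE := rewrite ?(c0D, c1D, c0B, c1B, c0N, c1N, c0Z, c1Z, c0M, c1M, c0_mkv, c1_mkv, c0_0, c1_0).

Definition W2 (F F' : point R) := N2 (c0 F - c0 F') (c1 F - c1 F').
Definition Kc (a : R) (F F' : point R) := 4 * a ^+ 2 - W2 F F'.
Definition Psi (a : R) (F F' Z : point R) :=
  let z0 := 2 * c0 Z - c0 F - c0 F' in let z1 := 2 * c1 Z - c1 F - c1 F' in
  let w0 := c0 F - c0 F' in let w1 := c1 F - c1 F' in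
  4 * a ^+ 2 * N2 z0 z1 - (z0 * w0 + z1 * w1) ^+ 2 - 4 * a ^+ 2 * Kc a F F'.

Lemma ell_iff (F F' Z : point R) a : dist F F' < 2 * a ->
  ellipse F F' a Z <-> Psi a F F' Z = 0.
Proof.
rewrite /ellipse !distE => h.
have := @ell_real a (c0 Z - c0 F) (c1 Z - c1 F) (c0 F - c0 F') (c1 F - c1 F') h.
rewrite (_ : c0 Z - c0 F + (c0 F - c0 F') = c0 Z - c0 F'); last by ring.
rewrite (_ : c1 Z - c1 F + (c1 F - c1 F') = c1 Z - c1 F'); last by ring.
rewrite (_ : Phi _ _ _ _ _ = Psi a F F' Z) //.
rewrite /Phi /Psi /Kc /W2 /N2; ring.
Qed.

Lemma rep_Psi S (F F' : point R) a Z : is_ellipse_with S F F' a -> (S Z <-> Psi a F F' Z = 0).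
Proof. case=> h1 h2; rewrite h2; exact: ell_iff. Qed.

Lemma rep_a_gt0 S (F F' : point R) a : is_ellipse_with S F F' a -> 0 < a.
Proof. case=> h _; have := sqrtr_ge0 (W2 F F'); move: h; rewrite distE -/(W2 F F'); lra. Qed.

Lemma rep_K_gt0 S (F F' : point R) a : is_ellipse_with S F F' a -> 0 < Kc a F F'.
Proof.
move=> r; have a0 := rep_a_gt0 r; case: r => h _; move: h; rewrite distE -/(W2 F F') /Kc => h.
have := sqr_sqrtr (N2_ge0 (c0 F - c0 F') (c1 F - c1 F')); rewrite -/(W2 F F') => e.
have := sqrtr_ge0 (W2 F F'); nra.
Qed.

Lemma W2_ge0 (F F' : point R) : 0 <= W2 F F'.
Proof. exact: N2_ge0. Qed.

Lemma dist_sym (p q : point R) : dist p q = dist q p.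
Proof. by rewrite !distE /N2; congr Num.sqrt; ring. Qed.

Lemma rep_swap S (F F' : point R) a : is_ellipse_with S F F' a -> is_ellipse_with S F' F a.
Proof.
case=> h1 h2; split; first by rewrite dist_sym.
by move=> P; rewrite h2 /ellipse addrC.
Qed.

Lemma rep_sym S (F F' : point R) a Z : is_ellipse_with S F F' a -> S Z -> S (F + F' - Z).
Proof.
move=> r; rewrite !(rep_Psi _ r) => <-; rewrite /Psi /Kc /W2; cE; rewrite /N2; ring.
Qed.

Lemma sym_center S (G G' C Z0 : point R) a : is_ellipse_with S G G' a ->
  (forall Z, S Z -> S (C - Z)) -> S Z0 -> C = G + G'.
Proof.
move=> r hC h0.
set v := G + G' - C.
have h1 : S (Z0 + v).
  have := rep_sym r (hC _ h0); congr S; apply: vecP; rewrite /v; cE; ring.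
have h2 : S (Z0 + v + v).
  have := rep_sym r (hC _ h1); congr S; apply: vecP; rewrite /v; cE; ring.
move: h0 h1 h2; rewrite !(rep_Psi _ r) => e0 e1 e2.
have K0 := rep_K_gt0 r.
have a0 := rep_a_gt0 r.
set v0 := c0 G + c0 G' - c0 C.
set v1 := c1 G + c1 G' - c1 C.
set w0 := c0 G - c0 G'.
set w1 := c1 G - c1 G'.
have id : Psi a G G' Z0 - 2 * Psi a G G' (Z0 + v) + Psi a G G' (Z0 + v + v) =
   8 * (4 * a ^+ 2 * N2 v0 v1 - (v0 * w0 + v1 * w1) ^+ 2).
  rewrite /Psi /v /v0 /v1 /w0 /w1 /Kc /W2; cE; rewrite /N2; ring.
rewrite e0 e1 e2 in id.
have lag : (v0 * w0 + v1 * w1) ^+ 2 + (v0 * w1 - v1 * w0) ^+ 2 = N2 v0 v1 * W2 G G'.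
  rewrite /W2 /N2 -/w0 -/w1; ring.
have hK : Kc a G G' = 4 * a ^+ 2 - W2 G G' by [].
have hN : N2 v0 v1 = 0.
  have : Kc a G G' * N2 v0 v1 <= 0.
    rewrite hK; have := sqr_ge0 (v0 * w1 - v1 * w0); nra.
  have := N2_ge0 v0 v1; nra.
have [z0 z1] : v0 = 0 /\ v1 = 0.
  move: hN; rewrite /N2 => hN; split; nra.
apply: vecP; cE; move: z0 z1; rewrite /v0 /v1 => z0 z1; lra.
Qed.

Lemma vertex S (F F' : point R) a : is_ellipse_with S F F' a ->
  exists Z, S Z /\ N2 (2 * c0 Z - c0 F - c0 F') (2 * c1 Z - c1 F - c1 F') = 4 * a ^+ 2.
Proof.
move=> r; have a0 := rep_a_gt0 r.
have W0 := W2_ge0 F F'.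
case: (eqVneq (W2 F F') 0) => hW.
  have [e0 e1] : c0 F' = c0 F /\ c1 F' = c1 F.
    have [] := N2_eq0 hW; move/eqP; rewrite subr_eq0 => /eqP ->; move/eqP; rewrite subr_eq0 => /eqP ->; done.
  exists (F + mkv a 0); rewrite (rep_Psi _ r) /Psi /Kc hW; cE; rewrite e0 e1 /N2; split; ring.
have s2 : (Num.sqrt (W2 F F') : R) ^+ 2 = W2 F F' by rewrite sqr_sqrtr.
move: (Num.sqrt (W2 F F') : R) s2 => s s2.
have sn : s != 0 by apply/eqP => s0; move: s2; rewrite s0 expr0n /= => /esym/eqP; rewrite (negbTE hW).
have k2 : (2 * a / s) ^+ 2 * W2 F F' = 4 * a ^+ 2 by rewrite -s2; field.
move: (2 * a / s) k2 => k k2.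
exists (F' + ((1 + k) / 2) *: (F - F')).
have z0 : 2 * c0 (F' + ((1 + k) / 2) *: (F - F')) - c0 F - c0 F' = k * (c0 F - c0 F').
  by cE; field.
have z1 : 2 * c1 (F' + ((1 + k) / 2) *: (F - F')) - c1 F - c1 F' = k * (c1 F - c1 F').
  by cE; field.
rewrite (rep_Psi _ r) /Psi z0 z1 /Kc.
have eN : N2 (k * (c0 F - c0 F')) (k * (c1 F - c1 F')) = k ^+ 2 * W2 F F'.
  rewrite /W2 /N2; ring.
rewrite eN k2; split => //.
have -> : k * (c0 F - c0 F') * (c0 F - c0 F') + k * (c1 F - c1 F') * (c1 F - c1 F') = k * W2 F F'.
  rewrite /W2 /N2; ring.
have -> : (k * W2 F F') ^+ 2 = 4 * a ^+ 2 * W2 F F' by rewrite -k2; ring.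
ring.
Qed.

Lemma bound S (F F' Z : point R) a : is_ellipse_with S F F' a -> S Z ->
  N2 (2 * c0 Z - c0 F - c0 F') (2 * c1 Z - c1 F - c1 F') <= 4 * a ^+ 2.
Proof.
move=> r; rewrite (rep_Psi _ r) /Psi => e.
have K0 := rep_K_gt0 r; move: K0 e; rewrite /Kc /W2.
set z0 := 2 * c0 Z - c0 F - c0 F'. set z1 := 2 * c1 Z - c1 F - c1 F'.
set w0 := c0 F - c0 F'. set w1 := c1 F - c1 F'.
move=> K0 e.
have lag : (z0 * w0 + z1 * w1) ^+ 2 + (z0 * w1 - z1 * w0) ^+ 2 = N2 z0 z1 * N2 w0 w1.
  rewrite /N2; ring.
have := sqr_ge0 (z0 * w1 - z1 * w0) => hc.
have h : (N2 z0 z1 - 4 * a ^+ 2) * (4 * a ^+ 2 - N2 w0 w1) <= 0.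
  rewrite mulrBl !mulrBr; lra.
nra.
Qed.

Lemma a_unique S (F F' G G' : point R) a1 a2 :
  is_ellipse_with S F F' a1 -> is_ellipse_with S G G' a2 -> a1 = a2.
Proof.
move=> r1 r2.
have [Z1 [h1 n1]] := vertex r1.
have [Z2 [h2 n2]] := vertex r2.
have c12 : F + F' = G + G' by apply: (sym_center r2 _ h1) => Z hZ; exact: rep_sym r1 hZ.
have c21 : G + G' = F + F' by apply: (sym_center r1 _ h2) => Z hZ; exact: rep_sym r2 hZ.
have b1 := bound r2 h1.
have b2 := bound r1 h2.
have e0 : c0 G + c0 G' = c0 F + c0 F' by rewrite -!c0D c21.
have e1 : c1 G + c1 G' = c1 F + c1 F' by rewrite -!c1D c21.
have q1 : 2 * c0 Z1 - c0 G - c0 G' = 2 * c0 Z1 - c0 F - c0 F'.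
  by rewrite -!addrA -!opprD e0.
have q2 : 2 * c1 Z1 - c1 G - c1 G' = 2 * c1 Z1 - c1 F - c1 F'.
  by rewrite -!addrA -!opprD e1.
have q3 : 2 * c0 Z2 - c0 F - c0 F' = 2 * c0 Z2 - c0 G - c0 G'.
  by rewrite -!addrA -!opprD e0.
have q4 : 2 * c1 Z2 - c1 F - c1 F' = 2 * c1 Z2 - c1 G - c1 G'.
  by rewrite -!addrA -!opprD e1.
rewrite q1 q2 n1 in b1; rewrite q3 q4 n2 in b2.
have := rep_a_gt0 r1; have := rep_a_gt0 r2; nra.
Qed.

Lemma quad (al be ga r1 r2 : R) : al * r1 ^+ 2 + be * r1 + ga = 0 ->
  al * r2 ^+ 2 + be * r2 + ga = 0 -> r1 != r2 ->
  (r2 - r1) ^+ 2 * al ^+ 2 = be ^+ 2 - 4 * al * ga /\ al * r1 * r2 = ga.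
Proof.
move=> e1 e2 ne.
have h : (r1 - r2) * (al * (r1 + r2) + be) = 0.
  rewrite -[RHS](subrr 0) -{1}e1 -e2; ring.
move/eqP: h; rewrite mulf_eq0 subr_eq0 (negbTE ne) /= addr_eq0 => /eqP h.
have hb : be = - (al * (r1 + r2)) by rewrite h opprK.
have hg : ga = al * r1 * r2.
  have E : ga = (al * r1 ^+ 2 + be * r1 + ga) - al * r1 ^+ 2 - be * r1 by ring.
  rewrite E e1 hb; ring.
split; last by rewrite hg.
rewrite hg hb; ring.
Qed.

Definition alpha a (F F' e : point R) :=
  4 * a ^+ 2 * N2 (c0 e) (c1 e) - (c0 e * (c0 F - c0 F') + c1 e * (c1 F - c1 F')) ^+ 2.

Definition cpt (F F' : point R) (sg : R) (e : point R) := 2^-1 *: (F + F') + sg *: e.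

Lemma chord S (G G' Y e : point R) a r1 r2 : is_ellipse_with S G G' a ->
  S (Y + r1 *: e) -> S (Y + r2 *: e) -> r1 != r2 ->
  (r2 - r1) ^+ 2 * alpha a G G' e ^+ 2 = 4 * a ^+ 2 * Kc a G G' *
    (alpha a G G' e - (c0 e * (2 * c1 Y - c1 G - c1 G') - c1 e * (2 * c0 Y - c0 G - c0 G')) ^+ 2).
Proof.
move=> r h1 h2 ne; move: h1 h2; rewrite !(rep_Psi _ r) => h1 h2.
set y0 := 2 * c0 Y - c0 G - c0 G'. set y1 := 2 * c1 Y - c1 G - c1 G'.
set w0 := c0 G - c0 G'. set w1 := c1 G - c1 G'.
set e0 := c0 e. set e1 := c1 e.
set be := 4 * (4 * a ^+ 2 * (y0 * e0 + y1 * e1) - (y0 * w0 + y1 * w1) * (e0 * w0 + e1 * w1)).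
set ga := 4 * a ^+ 2 * N2 y0 y1 - (y0 * w0 + y1 * w1) ^+ 2 - 4 * a ^+ 2 * Kc a G G'.
have ex : forall t, Psi a G G' (Y + t *: e) = 4 * alpha a G G' e * t ^+ 2 + be * t + ga.
  move=> t; rewrite /Psi /alpha /be /ga /y0 /y1 /w0 /w1 /e0 /e1; cE; rewrite /N2; ring.
rewrite !ex in h1 h2.
have [q _] := quad h1 h2 ne.
have e4 : (4 : R) ^+ 2 != 0 by rewrite expf_eq0 /= pnatr_eq0.
apply: (mulfI e4).
transitivity ((r2 - r1) ^+ 2 * (4 * alpha a G G' e) ^+ 2); first by ring.
rewrite q.
rewrite /be /ga /alpha /Kc /W2 -/e0 -/e1 -/w0 -/w1 /N2; ring.
Qed.

Lemma cpt_iff S (G G' e : point R) a sg : is_ellipse_with S G G' a ->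
  (S (cpt G G' sg e) <-> sg ^+ 2 * alpha a G G' e = a ^+ 2 * Kc a G G').
Proof.
move=> r; rewrite (rep_Psi _ r).
have z0 : 2 * c0 (cpt G G' sg e) - c0 G - c0 G' = 2 * sg * c0 e by rewrite /cpt; cE; field.
have z1 : 2 * c1 (cpt G G' sg e) - c1 G - c1 G' = 2 * sg * c1 e by rewrite /cpt; cE; field.
rewrite /Psi z0 z1.
have -> : 4 * a ^+ 2 * N2 (2 * sg * c0 e) (2 * sg * c1 e) -
  (2 * sg * c0 e * (c0 G - c0 G') + 2 * sg * c1 e * (c1 G - c1 G')) ^+ 2 -
  4 * a ^+ 2 * Kc a G G' = 4 * (sg ^+ 2 * alpha a G G' e - a ^+ 2 * Kc a G G').
  rewrite /alpha /N2; ring.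
split.
  move/eqP; rewrite mulf_eq0 pnatr_eq0 /= subr_eq0 => /eqP //.
by move=> ->; rewrite subrr mulr0.
Qed.

Lemma alpha_ge S (G G' e : point R) a : is_ellipse_with S G G' a ->
  Kc a G G' * N2 (c0 e) (c1 e) <= alpha a G G' e.
Proof.
move=> r; rewrite -subr_ge0.
have -> : alpha a G G' e - Kc a G G' * N2 (c0 e) (c1 e) =
   (c0 e * (c1 G - c1 G') - c1 e * (c0 G - c0 G')) ^+ 2.
  rewrite /alpha /Kc /W2 /N2; ring.
exact: sqr_ge0.
Qed.

Lemma center_exists S (G G' e : point R) a : is_ellipse_with S G G' a ->
  0 < N2 (c0 e) (c1 e) -> exists sg, S (cpt G G' sg e).
Proof.
move=> r hN.
have K0 := rep_K_gt0 r; have a0 := rep_a_gt0 r.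
have al0 : 0 < alpha a G G' e.
  have := alpha_ge e r; have : 0 < Kc a G G' * N2 (c0 e) (c1 e) by exact: mulr_gt0.
  lra.
exists (Num.sqrt (a ^+ 2 * Kc a G G' / alpha a G G' e)).
rewrite (cpt_iff _ _ r) sqr_sqrtr; last first.
  by apply: divr_ge0; [apply: mulr_ge0; [exact: sqr_ge0| lra] | lra].
by field; rewrite gt_eqF.
Qed.

Lemma focal S (F F' e : point R) a r1 r2 sg : is_ellipse_with S F F' a ->
  S (F + r1 *: e) -> S (F + r2 *: e) -> r1 != r2 -> S (cpt F F' sg e) ->
  (r2 - r1) ^+ 2 * a ^+ 2 = 4 * sg ^+ 4 * N2 (c0 e) (c1 e).
Proof.
move=> r h1 h2 ne hc.
have := chord r h1 h2 ne.
have -> : alpha a F F' e - (c0 e * (2 * c1 F - c1 F - c1 F') - c1 e * (2 * c0 F - c0 F - c0 F')) ^+ 2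
   = Kc a F F' * N2 (c0 e) (c1 e).
  rewrite /alpha /Kc /W2 /N2; ring.
move: hc; rewrite (cpt_iff _ _ r) => hc ch.
have K0 := rep_K_gt0 r; have a0 := rep_a_gt0 r.
have nz : (a ^+ 2 * Kc a F F') ^+ 2 != 0 by rewrite expf_eq0 /= mulf_neq0 // ?gt_eqF // exprn_gt0.
apply: (mulfI nz).
have -> : (a ^+ 2 * Kc a F F') ^+ 2 * ((r2 - r1) ^+ 2 * a ^+ 2) =
   a ^+ 2 * ((r2 - r1) ^+ 2 * (sg ^+ 2 * alpha a F F' e) ^+ 2) by rewrite hc; ring.
transitivity (a ^+ 2 * (sg ^+ 4 * ((r2 - r1) ^+ 2 * alpha a F F' e ^+ 2))); first by ring.
rewrite ch; ring.
Qed.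

Lemma c0g (A : 'M[R]_2) b x : c0 (affine_map A b x) = c0 x * A ord0 ord0 + c1 x * A i1 ord0 + c0 b.
Proof. by rewrite /affine_map; cE. Qed.
Lemma c1g (A : 'M[R]_2) b x : c1 (affine_map A b x) = c0 x * A ord0 i1 + c1 x * A i1 i1 + c1 b.
Proof. by rewrite /affine_map; cE. Qed.

Lemma img_sym S (F F' : point R) a (A : 'M[R]_2) b : is_ellipse_with S F F' a ->
  forall Z, image_set (affine_map A b) S Z ->
    image_set (affine_map A b) S (affine_map A b F + affine_map A b F' - Z).
Proof.
move=> r Z [x [hx ->]]; exists (F + F' - x); split; first exact: rep_sym r hx.
apply: vecP; cE; rewrite ?(c0g, c1g); cE; ring.
Qed.

Lemma img_center S (F F' G G' Z0 : point R) a1 a2 (A : 'M[R]_2) b :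
  is_ellipse_with S F F' a1 -> is_ellipse_with (image_set (affine_map A b) S) G G' a2 ->
  image_set (affine_map A b) S Z0 ->
  affine_map A b F + affine_map A b F' = G + G'.
Proof. move=> r1 r2 h0; exact: (sym_center r2 (img_sym r1) h0). Qed.

Lemma img_cpt (F F' G G' d : point R) sg (A : 'M[R]_2) b :
  affine_map A b F + affine_map A b F' = G + G' ->
  affine_map A b (cpt F F' sg d) = cpt G G' sg (d *m A).
Proof.
move=> e.
have e0 : c0 G + c0 G' = c0 (affine_map A b F) + c0 (affine_map A b F') by rewrite -!c0D e.
have e1 : c1 G + c1 G' = c1 (affine_map A b F) + c1 (affine_map A b F') by rewrite -!c1D e.
rewrite !(c0g, c1g) in e0 e1.
apply: vecP; rewrite /cpt !(c0g, c1g); cE.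
  by rewrite e0; field.
by rewrite e1; field.
Qed.

Lemma g_diff (A : 'M[R]_2) b (u v : point R) :
  affine_map A b v - affine_map A b u = (v - u) *m A.
Proof. apply: vecP; cE; rewrite ?(c0g, c1g); cE; ring. Qed.

Lemma seg_dec (u v F : point R) : on_segment u v F ->
  exists t, u = F + (- t) *: (v - u) /\ v = F + (1 - t) *: (v - u).
Proof.
case=> t [_ ->]; exists t; split; apply: vecP; cE; ring.
Qed.

Lemma seg_intro (G e : point R) r1 r2 : r1 <= 0 -> 0 <= r2 -> r1 < r2 ->
  on_segment (G + r1 *: e) (G + r2 *: e) G.
Proof.
move=> h1 h2 h3.
have d0 : r2 - r1 != 0 by rewrite subr_eq0 gt_eqF.
exists (- r1 / (r2 - r1)); split.
  apply/andP; split.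
    by apply: divr_ge0; lra.
  by rewrite ler_pdivrMr ?subr_gt0 //; lra.
apply: vecP; cE; by field.
Qed.

Lemma N2_pos (u v : point R) : u != v -> 0 < N2 (c0 (v - u)) (c1 (v - u)).
Proof.
move=> ne; rewrite lt_neqAle N2_ge0 andbT; apply/eqP => /esym/N2_eq0 [h0 h1].
move/eqP: ne; apply; apply: vecP; move: h0 h1; cE; lra.
Qed.

Lemma Krel S (F F' G G' u v : point R) a1 a2 (A : 'M[R]_2) b :
  is_ellipse_with S F F' a1 -> is_ellipse_with (image_set (affine_map A b) S) G G' a2 ->
  S u -> S v -> u != v -> on_segment u v F ->
  on_segment (affine_map A b u) (affine_map A b v) G ->
  a2 ^+ 2 * N2 (c0 (v - u)) (c1 (v - u)) = a1 ^+ 2 * N2 (c0 ((v - u) *m A)) (c1 ((v - u) *m A)).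
Proof.
move=> r1 r2 hu hv ne s1 s2.
have [t [eu ev]] := seg_dec s1.
have [sg hc] := center_exists r1 (N2_pos ne).
have ne' : - t != 1 - t.
  apply/eqP => h; suff : (1:R) == 0 by rewrite oner_eq0.
  apply/eqP; lra.
have f1 := focal r1 (eq_ind _ S hu _ eu) (eq_ind _ S hv _ ev) ne' hc.
rewrite (_ : 1 - t - - t = 1) ?expr1n ?mul1r in f1; last by ring.
have [t' [eu' ev']] := seg_dec s2.
rewrite g_diff in eu' ev'.
have gu : image_set (affine_map A b) S (affine_map A b u) by exists u.
have gv : image_set (affine_map A b) S (affine_map A b v) by exists v.
have ce := img_center r1 r2 gu.
have hc2 : image_set (affine_map A b) S (cpt G G' sg ((v - u) *m A)).
  by rewrite -(img_cpt _ _ ce); exists (cpt F F' sg (v - u)).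
have ne2 : - t' != 1 - t'.
  apply/eqP => h; suff : (1:R) == 0 by rewrite oner_eq0.
  apply/eqP; lra.
have f2 := focal r2 (eq_ind _ _ gu _ eu') (eq_ind _ _ gv _ ev') ne2 hc2.
rewrite (_ : 1 - t' - - t' = 1) ?expr1n ?mul1r in f2; last by ring.
rewrite f1 f2; ring.
Qed.

Lemma Psi_focal_line (G G' e : point R) a r :
  Psi a G G' (G + r *: e) = 4 * alpha a G G' e * r ^+ 2
     + 4 * Kc a G G' * (c0 e * (c0 G - c0 G') + c1 e * (c1 G - c1 G')) * r - Kc a G G' ^+ 2.
Proof. rewrite /Psi /alpha /Kc /W2; cE; rewrite /N2; ring. Qed.

Lemma focal_chord_exists S (F F' d : point R) a : is_ellipse_with S F F' a ->
  0 < N2 (c0 d) (c1 d) ->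
  exists r1 r2, r1 < 0 /\ 0 < r2 /\ S (F + r1 *: d) /\ S (F + r2 *: d).
Proof.
move=> r hN.
have K0 := rep_K_gt0 r; have a0 := rep_a_gt0 r.
have n2 : (Num.sqrt (N2 (c0 d) (c1 d)) : R) ^+ 2 = N2 (c0 d) (c1 d) by rewrite sqr_sqrtr // ltW.
have n0 : 0 < (Num.sqrt (N2 (c0 d) (c1 d)) : R) by rewrite sqrtr_gt0.
move: (Num.sqrt (N2 (c0 d) (c1 d)) : R) n2 n0 => n n2 n0.
set D := c0 d * (c0 F - c0 F') + c1 d * (c1 F - c1 F').
have hD : D ^+ 2 < 4 * a ^+ 2 * n ^+ 2.
  have lag : D ^+ 2 + (c0 d * (c1 F - c1 F') - c1 d * (c0 F - c0 F')) ^+ 2 = N2 (c0 d) (c1 d) * W2 F F'.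
    rewrite /D /W2 /N2; ring.
  have := sqr_ge0 (c0 d * (c1 F - c1 F') - c1 d * (c0 F - c0 F')).
  move: K0; rewrite /Kc => K0.
  rewrite n2; nra.
have m0 : 0 < 2 * a * n by rewrite mulr_gt0 // mulr_gt0.
have hD' : D ^+ 2 < (2 * a * n) ^+ 2.
  by have -> : (2 * a * n) ^+ 2 = 4 * a ^+ 2 * n ^+ 2 by ring.
have [p1 p2] : 0 < 2 * a * n - D /\ 0 < 2 * a * n + D.
  move: (2 * a * n) m0 hD' => m m0 hD'; split; nra.
have hal : alpha a F F' d = (2 * a * n - D) * (2 * a * n + D).
  rewrite /alpha -n2 -/D; ring.
have fac : forall t, Psi a F F' (F + t *: d) =
   (2 * (2 * a * n - D) * t + Kc a F F') * (2 * (2 * a * n + D) * t - Kc a F F').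
  move=> t; rewrite Psi_focal_line hal -/D; ring.
exists (- Kc a F F' / (2 * (2 * a * n - D))), (Kc a F F' / (2 * (2 * a * n + D))).
split; first by rewrite mulNr oppr_lt0 divr_gt0 // mulr_gt0.
split; first by rewrite divr_gt0 // mulr_gt0.
split; rewrite (rep_Psi _ r) fac.
  rewrite [X in X * _](_ : _ = 0) ?mul0r //.
  by field; rewrite gt_eqF.
rewrite [X in _ * X](_ : _ = 0) ?mulr0 //.
by field; rewrite gt_eqF.
Qed.

Lemma on_line S (G G' e X : point R) a r1 r2 : is_ellipse_with S G G' a ->
  0 < N2 (c0 e) (c1 e) -> r1 < r2 -> S (X + r1 *: e) -> S (X + r2 *: e) ->
  c0 e * (c1 X - c1 G) - c1 e * (c0 X - c0 G) = 0 ->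
  on_segment (X + r1 *: e) (X + r2 *: e) G.
Proof.
move=> r hN lt12 h1 h2 cr.
have K0 := rep_K_gt0 r; have a0 := rep_a_gt0 r.
set tau := ((c0 X - c0 G) * c0 e + (c1 X - c1 G) * c1 e) / N2 (c0 e) (c1 e).
have Nn : N2 (c0 e) (c1 e) != 0 by rewrite gt_eqF.
have k0 : c0 X - c0 G = tau * c0 e +
    (- c1 e * (c0 e * (c1 X - c1 G) - c1 e * (c0 X - c0 G))) / N2 (c0 e) (c1 e).
  by rewrite /tau; move: Nn; rewrite /N2 => Nn; field.
have k1 : c1 X - c1 G = tau * c1 e +
    (c0 e * (c0 e * (c1 X - c1 G) - c1 e * (c0 X - c0 G))) / N2 (c0 e) (c1 e).
  by rewrite /tau; move: Nn; rewrite /N2 => Nn; field.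
rewrite cr mulr0 mul0r addr0 in k0. rewrite cr mulr0 mul0r addr0 in k1.
have hX : forall t, X + t *: e = G + (t + tau) *: e.
  move=> t; apply: vecP; cE.
    by rewrite mulrDl addrA -k0; ring.
  by rewrite mulrDl addrA -k1; ring.
rewrite !hX in h1 h2 *.
move: h1 h2; rewrite !(rep_Psi _ r) !Psi_focal_line => h1 h2.
have ne : r1 + tau != r2 + tau by rewrite lt_eqF // ltrD2r.
have [_ q] := quad h1 h2 ne.
have al0 : 0 < alpha a G G' e.
  have := alpha_ge e r; have : 0 < Kc a G G' * N2 (c0 e) (c1 e) by exact: mulr_gt0.
  lra.
have neg : (r1 + tau) * (r2 + tau) < 0.
  have : 4 * alpha a G G' e * ((r1 + tau) * (r2 + tau)) < 0.
    rewrite mulrA q oppr_lt0; exact: exprn_gt0.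
  nra.
apply: seg_intro; nra.
Qed.

Lemma Ne_pos (A : 'M[R]_2) (u v : point R) : A \in unitmx -> u != v ->
  0 < N2 (c0 ((v - u) *m A)) (c1 ((v - u) *m A)).
Proof.
move=> hA ne; rewrite lt_neqAle N2_ge0 andbT; apply/eqP => /esym/N2_eq0 [h0 h1].
have z : (v - u) *m A = 0 by apply: vecP; rewrite ?h0 ?h1 ?c0_0 ?c1_0.
have := mulmxK hA (v - u); rewrite z mul0mx => /esym/eqP; rewrite subr_eq0 => /eqP e.
by move/eqP: ne; apply.
Qed.

Lemma dist_g (A : 'M[R]_2) b (p q : point R) :
  dist (affine_map A b p) (affine_map A b q) = Num.sqrt (N2 (c0 ((q - p) *m A)) (c1 ((q - p) *m A))).
Proof. rewrite distE; congr Num.sqrt; rewrite !(c0g, c1g); cE; rewrite /N2; ring. Qed.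

Lemma dist_d (p q : point R) : dist p q = Num.sqrt (N2 (c0 (q - p)) (c1 (q - p))).
Proof. rewrite distE; congr Num.sqrt; cE; rewrite /N2; ring. Qed.

Lemma N2Z k (d : point R) : N2 (c0 (k *: d)) (c1 (k *: d)) = k ^+ 2 * N2 (c0 d) (c1 d).
Proof. cE; rewrite /N2; ring. Qed.

Lemma N2ZM k (d : point R) (A : 'M[R]_2) :
  N2 (c0 ((k *: d) *m A)) (c1 ((k *: d) *m A)) = k ^+ 2 * N2 (c0 (d *m A)) (c1 (d *m A)).
Proof. cE; rewrite /N2; ring. Qed.

Lemma g_line (A : 'M[R]_2) b (F d : point R) r :
  affine_map A b (F + r *: d) = affine_map A b F + r *: (d *m A).
Proof. apply: vecP; cE; rewrite ?(c0g, c1g); cE; ring. Qed.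
End S.
Ltac cE := rewrite ?(c0D, c1D, c0B, c1B, c0N, c1N, c0Z, c1Z, c0M, c1M, c0_mkv, c1_mkv, c0_0, c1_0).

Unset Implicit Arguments.
Theorem proposition6 (R : rcfType) (F1 F2 : 'rV[R]_2) (a : R)
  (hE : dist F1 F2 < 2 * a)
  (p q : 'rV[R]_2) (hc : is_chord (ellipse F1 F2 a) p q)
  (A : 'M[R]_2) (b : 'rV[R]_2) (hA : A \in unitmx) :
  let E := ellipse F1 F2 a in
  let g := affine_map A b in
  let gE := image_set g E in
  (* (1) a focal chord of E parallel to c is mapped to a focal chord of g(E) *)
  let P1 := exists F u v, is_focus E F /\ is_chord E u v /\ on_segment u v F /\
              parallel (v - u) (q - p) /\
              exists G, is_focus gE G /\ on_segment (g u) (g v) G in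
  (* (2) length of c preserved *)
  let P2 := dist (g p) (g q) = dist p q in
  (* (3) major axis length preserved *)
  let P3 := major_axis_length gE (2 * a) in
  [/\ (P1 /\ P2 -> P3), (P1 /\ P3 -> P2) & (P2 /\ P3 -> P1)].
Proof.
move=> E g gE P1 P2 P3.
have repE : is_ellipse_with E F1 F2 a by split.
have a0 := rep_a_gt0 repE.
case: hc => hp [hq hpq].
have Nd := N2_pos hpq.
have Ne := Ne_pos hA hpq.
have P2iff : P2 <-> N2 (c0 ((q - p) *m A)) (c1 ((q - p) *m A)) = N2 (c0 (q - p)) (c1 (q - p)).
  rewrite /P2 /g dist_g dist_d; split; first by move/eqP; rewrite eqr_sqrt ?N2_ge0 // => /eqP.
  by move=> ->.
have ha2 : 2 * a / 2 = a by field.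
have KP1 : P1 -> exists G G' a2, is_ellipse_with gE G G' a2 /\ 0 < a2 /\
    a2 ^+ 2 * N2 (c0 (q - p)) (c1 (q - p)) = a ^+ 2 * N2 (c0 ((q - p) *m A)) (c1 ((q - p) *m A)).
  case=> F [u [v [[F' [a1 rF]] [[hu [hv huv]] [sF [[k hk] [G [[G' [a2 rG]] sG]]]]]]]].
  have ea1 := a_unique rF repE; rewrite ea1 in rF.
  have K := Krel rF rG hu hv huv sF sG.
  have Nuv := N2_pos huv.
  rewrite hk N2Z in K Nuv; rewrite N2ZM in K.
  have k2 : k ^+ 2 != 0.
    apply/eqP => k0; move: Nuv; rewrite k0 mul0r ltxx //.
  exists G, G', a2; split => //; split; first exact: rep_a_gt0 rG.
  apply: (mulfI k2); rewrite mulrCA K; ring.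
split.
- case=> /KP1 [G [G' [a2' [rG [a20 K]]]]] /P2iff e.
  exists G, G'; rewrite ha2.
  rewrite e in K.
  have : a2' ^+ 2 = a ^+ 2.
    apply: (mulIf (lt0r_neq0 Nd)); exact: K.
  move=> h; have -> : a = a2' by nra.
  exact: rG.
- case=> /KP1 [G [G' [a2' [rG [a20 K]]]]] [G1 [G2 rG3]].
  rewrite ha2 in rG3.
  have ea := a_unique rG rG3; rewrite ea in K.
  apply/P2iff; apply: (mulfI (lt0r_neq0 (exprn_gt0 2 a0))); by rewrite -K.
- case=> /P2iff eN [G1 [G2 rG3]].
  rewrite ha2 in rG3.
  set d := q - p in Nd Ne eN *.
  set e := d *m A in Ne eN *.
  have [r1 [r2 [r1n [r2p [h1 h2]]]]] := focal_chord_exists repE Nd.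
  have lt12 : r1 < r2 by lra.
  have ne12 : r1 != r2 by rewrite lt_eqF.
  have [sg hs] := center_exists repE Nd.
  have f1 := focal repE h1 h2 ne12 hs.
  have gu : gE (g (F1 + r1 *: d)) by exists (F1 + r1 *: d).
  have gv : gE (g (F1 + r2 *: d)) by exists (F1 + r2 *: d).
  have ce := img_center repE rG3 gu.
  have hs2 : gE (cpt G1 G2 sg e).
    by rewrite /e -(img_cpt _ _ ce); exists (cpt F1 F2 sg d).
  rewrite /g !g_line -/e in gu gv.
  have ch := chord rG3 gu gv ne12.
  move: hs2; rewrite (cpt_iff _ _ rG3) => hs2.
  have K2 := rep_K_gt0 rG3.
  set X := affine_map A b F1 in gu gv ch.
  set al := alpha a G1 G2 e in ch hs2.
  set cr := c0 e * (2 * c1 X - c1 G1 - c1 G2) - c1 e * (2 * c0 X - c0 G1 - c0 G2) in ch.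
  have sg0 : sg != 0.
    apply/eqP => s0; have : 0 < a ^+ 2 * Kc a G1 G2 by rewrite mulr_gt0 // exprn_gt0.
    by rewrite -hs2 s0 expr0n /= mul0r ltxx.
  have key : al - cr ^+ 2 = Kc a G1 G2 * N2 (c0 e) (c1 e).
    have nz : 4 * a ^+ 2 * Kc a G1 G2 * sg ^+ 4 != 0.
      by rewrite !mulf_neq0 // ?gt_eqF // ?exprn_gt0 // ?expf_neq0.
    apply: (mulfI nz).
    transitivity (sg ^+ 4 * ((r2 - r1) ^+ 2 * al ^+ 2)); first by rewrite ch; ring.
    transitivity (a ^+ 2 * Kc a G1 G2 ^+ 2 * ((r2 - r1) ^+ 2 * a ^+ 2)).
      transitivity ((r2 - r1) ^+ 2 * (sg ^+ 2 * al) ^+ 2); first by ring.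
      by rewrite hs2; ring.
    by rewrite f1 eN; ring.
  set cw := c0 e * (c1 G1 - c1 G2) - c1 e * (c0 G1 - c0 G2).
  have cw2 : cr ^+ 2 = cw ^+ 2.
    have : al - Kc a G1 G2 * N2 (c0 e) (c1 e) = cw ^+ 2.
      rewrite /al /alpha /Kc /W2 /cw /N2; ring.
    rewrite -key => h; rewrite -h; ring.
  have : (cr - cw) * (cr + cw) = 0.
    have -> : (cr - cw) * (cr + cw) = cr ^+ 2 - cw ^+ 2 by ring.
    by rewrite cw2 subrr.
  move/eqP; rewrite mulf_eq0 => /orP [] /eqP hcr.
  + rewrite /P1; exists F1, (F1 + r1 *: d), (F1 + r2 *: d); split; first by exists F2, a.
    split.
      split => //; split => //.
      apply/eqP => h.
      have h0 : c0 (F1 + r1 *: d) = c0 (F1 + r2 *: d) by rewrite h.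
      have h1' : c1 (F1 + r1 *: d) = c1 (F1 + r2 *: d) by rewrite h.
      move: h0 h1'; rewrite !c0D !c1D !c0Z !c1Z => h0 h1'.
      have : (r2 - r1) ^+ 2 * N2 (c0 d) (c1 d) = 0.
        have z0 : (r2 - r1) * c0 d = 0.
          rewrite mulrBl; apply/eqP; rewrite subr_eq0; apply/eqP; apply: (addrI (c0 F1)); by rewrite h0.

        have z1 : (r2 - r1) * c1 d = 0.
          rewrite mulrBl; apply/eqP; rewrite subr_eq0; apply/eqP; apply: (addrI (c1 F1)); by rewrite h1'.

        by rewrite /N2 mulrDr -!exprMn z0 z1 expr0n /= addr0.
      move/eqP; rewrite mulf_eq0 expf_eq0 /= subr_eq0 eq_sym (negbTE ne12) /=.
      by rewrite gt_eqF.
    split; first by apply: seg_intro; lra.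
    split; first by exists (r2 - r1); apply: vecP; cE; ring.
    exists G1; split; first by exists G2, a.
    rewrite /g !g_line -/e -/X.
    apply: (on_line rG3 Ne lt12 gu gv).
    transitivity ((cr - cw) / 2); last by rewrite hcr mul0r.
    by rewrite /cr /cw; field.
  + rewrite /P1; exists F1, (F1 + r1 *: d), (F1 + r2 *: d); split; first by exists F2, a.
    split.
      split => //; split => //.
      apply/eqP => h.
      have h0 : c0 (F1 + r1 *: d) = c0 (F1 + r2 *: d) by rewrite h.
      have h1' : c1 (F1 + r1 *: d) = c1 (F1 + r2 *: d) by rewrite h.
      move: h0 h1'; rewrite !c0D !c1D !c0Z !c1Z => h0 h1'.
      have : (r2 - r1) ^+ 2 * N2 (c0 d) (c1 d) = 0.
        have z0 : (r2 - r1) * c0 d = 0.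
          rewrite mulrBl; apply/eqP; rewrite subr_eq0; apply/eqP; apply: (addrI (c0 F1)); by rewrite h0.

        have z1 : (r2 - r1) * c1 d = 0.
          rewrite mulrBl; apply/eqP; rewrite subr_eq0; apply/eqP; apply: (addrI (c1 F1)); by rewrite h1'.

        by rewrite /N2 mulrDr -!exprMn z0 z1 expr0n /= addr0.
      move/eqP; rewrite mulf_eq0 expf_eq0 /= subr_eq0 eq_sym (negbTE ne12) /=.
      by rewrite gt_eqF.
    split; first by apply: seg_intro; lra.
    split; first by exists (r2 - r1); apply: vecP; cE; ring.
    exists G2; split; first by exists G1, a; exact: rep_swap rG3.
    rewrite /g !g_line -/e -/X.
    apply: (on_line (rep_swap rG3) Ne lt12 gu gv).
    transitivity ((cr + cw) / 2); last by rewrite hcr mul0r.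
    by rewrite /cr /cw; field.
Qed.
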